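(* Let $G=(V,E)$ be a strongly connected weighted directed graph and $\delta\in[0,1]$. For any $T\subseteq S\subseteq V$, $$\mathsf{fp}_{r=1}^\delta(G,S)=\mathsf{fp}_{r=1}^\delta(G,T)+\mathsf{fp}_{r=1}^\delta(G,S\setminus T).$$
   Context: Mixed $\delta$-updating on a weighted directed graph with weights $w_{uv}\ge0$ ($u\to v$ is an edge iff $w_{uv}>0$): each vertex holds a mutant (fitness $r$) or wild-type (fitness $1$); $f_S(u)$ is the fitness at $u$ when $S$ is the mutant set. At each step, with probability $\delta$ a death-Birth step: choose $v$ uniformly to die, choose $u$ with probability proportional to $f_S(u)w_{uv}$, $u$ copies its type onto $v$; with probability $1-\delta$ a Birth-death step: choose $u$ with probability proportional to $f_S(u)$, choose $v$ with probability proportional to $w_{uv}$, $u$ copies its type onto $v$. $\mathsf{fp}_r^\delta(G,S_0)$ is the probability all vertices eventually become mutant from initial mutant set $S_0$. *)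

(* Defs.v *)
From HB Require Import structures.
From mathcomp Require Import all_boot all_order all_algebra.
From mathcomp Require Import all_classical all_reals all_analysis.
Set Implicit Arguments. Unset Strict Implicit. Unset Printing Implicit Defensive.
Import Order.TTheory GRing.Theory Num.Theory numFieldNormedType.Exports.
Local Open Scope ring_scope.

Section Moran.
Variables (R : realType) (V : finType) (w : V -> V -> R).

Definition fitness (r : R) (S : {set V}) (u : V) : R := if u \in S then r else 1.

(* probability that, in one step of mixed delta-updating from mutant set S,
   vertex u reproduces onto vertex v *)
Definition pair_prob (r delta : R) (S : {set V}) (u v : V) : R :=
  delta * (#|V|%:R)^-1 * (fitness r S u * w u v / \sum_(x : V) fitness r S x * w x v)
  + (1 - delta) * (fitness r S u / \sum_(x : V) fitness r S x)
                * (w u v / \sum_(y : V) w u y).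

Definition after (S : {set V}) (u v : V) : {set V} :=
  if u \in S then v |: S else S :\ v.

Definition trans (r delta : R) (S S' : {set V}) : R :=
  \sum_(u : V) \sum_(v : V) pair_prob r delta S u v * (after S u v == S')%:R.

Fixpoint allmut_at (r delta : R) (n : nat) (S : {set V}) : R :=
  match n with
  | 0 => (S == [set: V])%:R
  | n'.+1 => \sum_(S' : {set V}) trans r delta S S' * allmut_at r delta n' S'
  end.

(* fixation probability fp_r^delta(G, S0): probability that all vertices
   eventually become mutant (setT is absorbing, so this is the limit of the
   probability of being at setT at time n) *)
Definition fp (r delta : R) (S0 : {set V}) : R :=
  limn (fun n => allmut_at r delta n S0).

End Moran.

Definition strongly_connected (R : realType) (V : finType) (w : V -> V -> R) :=
  forall u v : V, connect (fun x y => 0 < w x y) u v.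

(* Main.v *)
Require Import Defs.
From HB Require Import structures.
From mathcomp Require Import all_boot all_order all_algebra.
From mathcomp Require Import all_classical all_reals all_analysis.
From mathcomp Require Import ring lra zify.
Import Order.TTheory GRing.Theory Num.Theory numFieldNormedType.Exports.
Local Open Scope ring_scope.

Section Proof.
Variables (R : realType) (V : finType) (w : V -> V -> R) (delta : R).
Hypothesis hw : forall u v, 0 <= w u v.
Hypothesis hd0 : 0 <= delta.
Hypothesis hd1 : delta <= 1.

Lemma fitE (S : {set V}) : fitness (1:R) S = fun _ => 1.
Proof. by apply: boolp.funext => x; rewrite /fitness; case: ifP. Qed.

Definition p u v := pair_prob w 1 delta [set: V] u v.

Lemma pS S u v : pair_prob w 1 delta S u v = p u v.
Proof. by rewrite /p /pair_prob !fitE. Qed.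

Lemma p_ge0 u v : 0 <= p u v.
Proof.
rewrite /p /pair_prob fitE /=.
have hN : 0 <= (#|V|%:R : R)^-1 by rewrite invr_ge0.
apply: addr_ge0; apply: mulr_ge0; rewrite ?mulr_ge0 ?divr_ge0 ?subr_ge0 ?invr_ge0 ?sumr_ge0 ?mul1r //; 
  by move=> *; rewrite ?mul1r.
Qed.

Fixpoint it {X : Type} (aft : X -> V -> V -> X) (n : nat) (f : X -> R) (x : X) : R :=
  match n with
  | 0 => f x
  | n'.+1 => \sum_u \sum_v p u v * @it X aft n' f (aft x u v)
  end.

Lemma it_proj (X Y : Type) (aX : X -> V -> V -> X) (aY : Y -> V -> V -> Y) (pi : X -> Y)
  (H : forall x u v, pi (aX x u v) = aY (pi x) u v) n f x :
  it aX n (fun x => f (pi x)) x = it aY n f (pi x).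
Proof.
elim: n x => //= n IH x; apply: eq_bigr => u _; apply: eq_bigr => v _.
by rewrite IH H.
Qed.

Lemma it_lin (X : Type) (aX : X -> V -> V -> X) n a b f g x :
  it aX n (fun x => a * f x + b * g x) x = a * it aX n f x + b * it aX n g x.
Proof.
elim: n x => //= n IH x.
rewrite !mulr_sumr -big_split; apply: eq_bigr => u _.
rewrite !mulr_sumr -big_split; apply: eq_bigr => v _ /=.
rewrite IH; ring.
Qed.

Lemma it_mono (X : Type) (aX : X -> V -> V -> X) (P : X -> Prop)
  (HP : forall x u v, P x -> P (aX x u v)) n f g
  (Hfg : forall x, P x -> f x <= g x) x : P x -> it aX n f x <= it aX n g x.
Proof.
elim: n x => /= [|n IH] x Px; first exact: Hfg.
apply: ler_sum => u _; apply: ler_sum => v _.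
by rewrite ler_wpM2l ?p_ge0 //; apply: IH; apply: HP.
Qed.

Arguments it_mono {X aX P} HP n f g Hfg x.

Lemma it_add (X : Type) (aX : X -> V -> V -> X) n m f x :
  it aX (n + m) f x = it aX n (it aX m f) x.
Proof.
elim: n x => //= n IH x; apply: eq_bigr => u _; apply: eq_bigr => v _.
by rewrite IH.
Qed.

Section Sum1.
Hypothesis hsum : \sum_u \sum_v p u v = 1.

Lemma it_const (X : Type) (aX : X -> V -> V -> X) n c x : it aX n (fun _ => c) x = c.
Proof.
elim: n x => //= n IH x.
under eq_bigr do under eq_bigr do rewrite IH.
by rewrite -[RHS]mul1r -hsum mulr_suml; apply: eq_bigr => u _; rewrite mulr_suml.
Qed.

Lemma it_fix (X : Type) (aX : X -> V -> V -> X) n f x :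
  (forall u v, aX x u v = x) -> it aX n f x = f x.
Proof.
move=> H; elim: n => //= n IH.
under eq_bigr do under eq_bigr do rewrite H IH.
by rewrite -[RHS]mul1r -hsum mulr_suml; apply: eq_bigr => u _; rewrite mulr_suml.
Qed.
End Sum1.

Definition f0 (S : {set V}) : R := (S == [set: V])%:R.

Lemma allmutE n S : allmut_at w 1 delta n S = it (@after V) n f0 S.
Proof.
elim: n S => //= n IH S.
under eq_bigr do rewrite IH.
rewrite /trans.
under eq_bigr do rewrite mulr_suml.
rewrite exchange_big; apply: eq_bigr => u _.
under eq_bigr do rewrite mulr_suml.
rewrite exchange_big; apply: eq_bigr => v _.
rewrite (bigD1 (after S u v)) //= eqxx mulr1 pS big1 ?addr0 // => S' /negbTE.
by rewrite eq_sym => ->; rewrite mulr0 mul0r.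
Qed.


Notation E0 := (@finset.set0 V).

Lemma it_ge0 (X : Type) (aX : X -> V -> V -> X) n f x :
  (forall y, 0 <= f y) -> 0 <= it aX n f x.
Proof.
move=> H; elim: n x => //= n IH x.
by apply: sumr_ge0 => u _; apply: sumr_ge0 => v _; rewrite mulr_ge0 ?p_ge0.
Qed.

Lemma it_scale (X : Type) (aX : X -> V -> V -> X) n a f x :
  it aX n (fun x => a * f x) x = a * it aX n f x.
Proof.
elim: n x => //= n IH x.
rewrite mulr_sumr; apply: eq_bigr => u _.
rewrite mulr_sumr; apply: eq_bigr => v _ /=.
rewrite IH; ring.
Qed.

Lemma it_sub (X : Type) (aX : X -> V -> V -> X) n f g x :
  it aX n (fun x => f x - g x) x = it aX n f x - it aX n g x.
Proof.
have -> : (fun x => f x - g x) = (fun x => 1 * f x + (-1) * g x).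
  by apply: boolp.funext => y; rewrite mul1r mulN1r.
by rewrite it_lin mul1r mulN1r.
Qed.

Lemma sum_ge_term (I : finType) (F : I -> R) j :
  (forall i, 0 <= F i) -> F j <= \sum_i F i.
Proof. by move=> H; rewrite (bigD1 j) //= lerDl sumr_ge0. Qed.

Lemma after_T u v : after [set: V] u v = [set: V].
Proof. by rewrite /after finset.in_setT; apply/setP => x; rewrite !inE orbT. Qed.

Lemma after_0 u v : after E0 u v = E0.
Proof. by rewrite /after inE /=; apply/setP => x; rewrite !inE andbF. Qed.

Lemma after_U (A B : {set V}) u v : after (A :|: B) u v = after A u v :|: after B u v.
Proof.
rewrite /after inE; apply/setP => x.
by case: (u \in A); case: (u \in B); rewrite !inE;
  case: (x == v); case: (x \in A); case: (x \in B).
Qed.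

Lemma dj_after (A B : {set V}) u v : A :&: B == E0 -> after A u v :&: after B u v == E0.
Proof.
move/eqP/setP => H; apply/eqP/setP => x.
move: (H u) (H x); rewrite /after.
case hA: (u \in A); case hB: (u \in B); rewrite !inE ?hA ?hB /=;
  case: (x == v); case: (x \in A); case: (x \in B) => //.
Qed.

Definition tau (S : {set V}) : R := ((S != E0) && (S != [set: V]))%:R.

Lemma tau_ge0 S : 0 <= tau S.
Proof. by rewrite /tau ler0n. Qed.

Lemma tau_le1 S : tau S <= 1.
Proof. by rewrite /tau; case: (_ && _). Qed.

Lemma f0_ge0 S : 0 <= f0 S.
Proof. by rewrite /f0 ler0n. Qed.

Lemma f0_le1 S : f0 S <= 1.
Proof. by rewrite /f0; case: (_ == _). Qed.

Lemma T_neq0 (a0 : V) : ([set: V] == E0) = false.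
Proof. by apply/negbTE/negP => /eqP/setP/(_ a0); rewrite !inE. Qed.

Lemma phi_bounds (a0 : V) (A B : {set V}) : A :&: B == E0 ->
  0 <= f0 (A :|: B) - f0 A - f0 B <= tau A.
Proof.
move=> /eqP hd.
have hT := T_neq0 a0.
have hT2 : (E0 == [set: V]) = false by rewrite eq_sym.
rewrite /f0 /tau.
have [hU|hU] := eqVneq (A :|: B) [set: V]; last first.
  have -> : (A == [set: V]) = false.
    by apply/negbTE; apply: contra_neq hU => ->; rewrite finset.setTU.
  have -> : (B == [set: V]) = false.
    by apply/negbTE; apply: contra_neq hU => ->; rewrite finset.setUT.
  by rewrite /= !subr0 lexx ler0n.
have [hA|hA] := eqVneq A E0.
  have hB : B = [set: V] by rewrite -hU hA finset.set0U.
  by rewrite hA hB eqxx hT2 /= subr0 subrr lexx.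
have [hA'|hA'] := eqVneq A [set: V].
  have hB : B = E0 by rewrite -hd hA' finset.setTI.
  by rewrite hB hT2 /= subr0 subrr lexx.
have -> : (B == [set: V]) = false.
  apply/negbTE; apply: contra_neq hA => hB; by rewrite -hd hB finset.setIT.
by rewrite /= !subr0 ler01 lexx.
Qed.

Lemma cross (S : {set V}) a b :
  connect (fun x y => 0 < w x y) a b -> a \in S -> b \notin S ->
  exists u v, [/\ u \in S, v \notin S & 0 < w u v].
Proof.
move/connectP => [q hq ->]; elim: q a hq => [|x q IH] a /=; first by move=> _ ->.
move=> /andP [hax hq] aS.
case xS: (x \in S); first exact: IH hq xS.
by move=> _; exists a, x; split => //; rewrite xS.
Qed.

Lemma p_gt0 u v : 0 < w u v -> 0 < p u v.
Proof.
move=> huv.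
rewrite /p /pair_prob fitE /= !mul1r.
have hN : (0 < #|V|)%N by apply/card_gt0P; exists u.
have hN' : 0 < (#|V|%:R : R) by rewrite ltr0n.
have hS1 : \sum_(x:V) (1:R) = #|V|%:R by rewrite sumr_const.
have hWi : 0 < \sum_x 1 * w x v.
  under eq_bigr do rewrite mul1r.
  by apply: lt_le_trans huv _; apply: sum_ge_term.
have hWo : 0 < \sum_y w u y.
  by apply: lt_le_trans huv _; apply: sum_ge_term.
rewrite hS1 -!mulrA.
set A := _ * (w u v / _).
set B := _ * (w u v / _).
have hA : 0 < A by rewrite /A; apply: mulr_gt0; [rewrite invr_gt0 | apply: divr_gt0].
have hB : 0 < B by rewrite /B; apply: mulr_gt0; [rewrite invr_gt0 | apply: divr_gt0].
have [d0|dpos] := eqVneq delta 0.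
  by rewrite d0 mul0r add0r subr0 mul1r.
have dp : 0 < delta by rewrite lt_neqAle eq_sym dpos hd0.
have := mulr_gt0 dp hA.
have : 0 <= (1 - delta) * B by rewrite mulr_ge0 ?subr_ge0 // ltW.
lra.
Qed.

Lemma finmin (X : finType) (P : pred X) (g : X -> R) :
  (forall x, P x -> 0 < g x) ->
  exists e, [/\ 0 < e, e <= 1 & forall x, P x -> e <= g x].
Proof.
move=> H.
suff [e [e0 e1 he]] : exists e, [/\ 0 < e, e <= 1 & forall x, x \in enum X -> P x -> e <= g x].
  by exists e; split => // x; apply: he; rewrite mem_enum.
elim: (enum X) => [|a s [e [e0 e1 IH]]]; first by exists 1; split.
case Pa: (P a).
  exists (Order.min e (g a)); split.
  - by rewrite lt_min e0 H.
  - by rewrite ge_min e1.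
  - move=> x; rewrite inE => /orP [/eqP -> _ | xs Px].
      by rewrite ge_min lexx orbT.
    by rewrite ge_min IH.
exists e; split => // x; rewrite inE => /orP [/eqP -> | xs]; first by rewrite Pa.
exact: IH.
Qed.

Arguments finmin {X P} g.

Section Main.
Hypothesis hsum : \sum_u \sum_v p u v = 1.
Hypothesis hsc : strongly_connected w.

Lemma reach k (S : {set V}) : S != E0 -> (#|~: S| <= k)%N -> 0 < it (@after V) k f0 S.
Proof.
elim: k S => [|k IH] S hS hk.
  have : ~: S = E0 by apply: cards0_eq; apply/eqP; rewrite -leqn0.
  move=> hC; have -> : S = [set: V] by rewrite -[S]finset.setCK hC finset.setC0.
  by rewrite /= /f0 eqxx ltr01.
have [hT|hT] := eqVneq S [set: V].
  by rewrite hT it_fix // ?/f0 ?eqxx ?ltr01 // => u v; rewrite after_T.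
have [a aS] : exists a, a \in S by apply/set0Pn.
have [b bS] : exists b, b \notin S.
  have : ~: S != E0 by apply: contra_neq hT => h; rewrite -[S]finset.setCK h finset.setC0.
  by case/set0Pn => b; rewrite inE => bS; exists b.
have [u [v [uS vS huv]]] := @cross S a b (hsc a b) aS bS.
rewrite /=.
have H2 : forall u' v', 0 <= p u' v' * it (@after V) k f0 (after S u' v').
  by move=> u' v'; rewrite mulr_ge0 ?p_ge0 ?it_ge0 // => y; exact: f0_ge0.
have H1 : forall u', 0 <= \sum_v' p u' v' * it (@after V) k f0 (after S u' v').
  by move=> u'; apply: sumr_ge0 => v' _.
apply: lt_le_trans (@sum_ge_term _ _ u H1).
apply: lt_le_trans (@sum_ge_term _ _ v (H2 u)).
apply: mulr_gt0; first exact: p_gt0.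
apply: IH; rewrite /after uS.
  by apply/set0Pn; exists v; rewrite !inE eqxx.
have h1 := cardsC (v |: S); have h2 := cardsC S; have h3 := cardsU1 v S.
rewrite vS /= in h3.
lia.
Qed.

Definition K := #|V|.

Lemma eta_ex : exists eta, [/\ 0 < eta, eta <= 1 &
  forall S : {set V}, S != E0 -> eta <= it (@after V) K f0 S].
Proof.
apply: (finmin (P := fun S : {set V} => S != E0)) => S hS.
apply: reach => //; rewrite /K.
by have := cardsC (~: S); lia.
Qed.

Definition absorbing (S : {set V}) := (S == E0) || (S == [set: V]).

Lemma absorb_fix (S : {set V}) u v : absorbing S -> after S u v = S.
Proof. by case/orP => /eqP ->; rewrite ?after_0 ?after_T. Qed.

Lemma tau_abs S : absorbing S -> tau S = 0.
Proof. by rewrite /tau /absorbing; case: (S == E0); case: (S == [set: V]). Qed.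

Lemma tau_nabs S : ~~ absorbing S -> tau S = 1.
Proof. by rewrite /tau /absorbing; case: (S == E0); case: (S == [set: V]). Qed.

Lemma t_step S : it (@after V) 1 tau S <= tau S.
Proof.
case hS: (absorbing S).
  by rewrite it_fix // => u v; rewrite absorb_fix.
rewrite tau_nabs ?hS //.
rewrite -[X in _ <= X](it_const hsum _ (@after V) 1%N 1 S).
apply: (it_mono (P := fun _ => True)) => // x _; exact: tau_le1.
Qed.

Lemma t_mono n S : it (@after V) n.+1 tau S <= it (@after V) n tau S.
Proof.
rewrite -addn1 it_add.
apply: (it_mono (P := fun _ => True)) => // x _; exact: t_step.
Qed.

Lemma t_anti m n S : (m <= n)%N -> it (@after V) n tau S <= it (@after V) m tau S.
Proof.
move/subnK <-; elim: (n - m)%N => [|d IH]; first by rewrite add0n.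
by rewrite addSn; apply: le_trans (t_mono _ _) IH.
Qed.

Lemma t_geo eta : eta <= 1 -> (forall S : {set V}, S != E0 -> eta <= it (@after V) K f0 S) ->
  forall j S, it (@after V) (K * j) tau S <= (1 - eta) ^+ j.
Proof.
move=> e1 he.
have tK : forall S, it (@after V) K tau S <= (1 - eta) * tau S.
  move=> S; case hS: (absorbing S).
    by rewrite it_fix ?tau_abs ?mulr0 // => u v; rewrite absorb_fix.
  rewrite tau_nabs ?hS // mulr1.
  have hS0 : S != E0 by move: hS; rewrite /absorbing; case: (S == E0).
  have := he S hS0.
  have : it (@after V) K tau S <= it (@after V) K (fun x => (fun _ => 1) x - f0 x) S.
    apply: (it_mono (P := fun _ => True)) => // x _.
    rewrite /tau /f0; case: (x == [set: V]); rewrite ?andbF ?subr0 ?subrr //.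
    by rewrite andbT; case: (x != E0).
  by rewrite it_sub it_const //; lra.
elim=> [|j IH] S; first by rewrite muln0 /= expr0 tau_le1.
rewrite mulnS addnC it_add exprS.
apply: le_trans (_ : it (@after V) (K * j) (fun x => (1 - eta) * tau x) S <= _).
  by apply: (it_mono (P := fun _ => True)).
rewrite it_scale; apply: ler_wpM2l; last exact: IH.
by rewrite subr_ge0.
Qed.

Lemma q_step S : f0 S <= it (@after V) 1 f0 S.
Proof.
have [hT|hT] := eqVneq S [set: V].
  by rewrite it_fix // => u v; rewrite hT after_T.
rewrite /f0 (negbTE hT); apply: it_ge0 => y; exact: f0_ge0.
Qed.

Lemma q_homo S : {homo (fun n => it (@after V) n f0 S) : n m / (n <= m)%N >-> n <= m}.
Proof.
move=> m n /subnK <- /=; elim: (n - m)%N => [|d IH]; first by rewrite add0n.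
apply: le_trans IH _; rewrite addSn -addn1 [X in _ <= X]it_add.
apply: (it_mono (P := fun _ => True)) => // x _; exact: q_step.
Qed.

Lemma q_le1 n S : it (@after V) n f0 S <= 1.
Proof.
rewrite -[X in _ <= X](it_const hsum _ (@after V) n 1 S).
apply: (it_mono (P := fun _ => True)) => // x _; exact: f0_le1.
Qed.

Lemma q_cvg S : cvgn (fun n => it (@after V) n f0 S).
Proof.
apply: nondecreasing_is_cvgn; first exact: q_homo.
by exists 1 => _ [n _ <-]; exact: q_le1.
Qed.

Definition aft2 (x : {set V} * {set V}) u v := (after x.1 u v, after x.2 u v).

Lemma dcvg (a0 : V) (A B : {set V}) : A :&: B == E0 ->
  ((fun n => it (@after V) n f0 (A :|: B) - it (@after V) n f0 A - it (@after V) n f0 B)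
     @ \oo --> 0)%classic.
Proof.
move=> hd.
have [eta [e0 e1 he]] := eta_ex.
have hb : forall n, 0 <= it (@after V) n f0 (A :|: B) - it (@after V) n f0 A - it (@after V) n f0 B
                     <= it (@after V) n tau A.
  move=> n.
  have EU := it_proj _ _ aft2 (@after V) (fun x => x.1 :|: x.2)
    (fun x u v => esym (after_U x.1 x.2 u v)) n f0 (A, B).
  have E1 := it_proj _ _ aft2 (@after V) (fun x => x.1)
    (fun x u v => erefl) n f0 (A, B).
  have E2 := it_proj _ _ aft2 (@after V) (fun x => x.2)
    (fun x u v => erefl) n f0 (A, B).
  have Et := it_proj _ _ aft2 (@after V) (fun x => x.1)
    (fun x u v => erefl) n tau (A, B).
  rewrite /= in EU E1 E2 Et.
  rewrite -EU -E1 -E2 -Et.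
  rewrite -(it_sub _ _ n (fun x => f0 (x.1 :|: x.2)) (fun x => f0 x.1)).
  rewrite -(it_sub _ _ n (fun x => f0 (x.1 :|: x.2) - f0 x.1) (fun x => f0 x.2)).
  have HP : forall (x : {set V} * {set V}) u v, x.1 :&: x.2 == E0 -> (aft2 x u v).1 :&: (aft2 x u v).2 == E0.
    by move=> [A' B'] u v /= h; exact: dj_after.
  apply/andP; split.
    rewrite -[X in X <= _](it_const hsum _ aft2 n 0 (A, B)).
    apply: (it_mono (P := fun x => x.1 :&: x.2 == E0)) => // x hx.
    by case/andP: (phi_bounds a0 _ _ hx).
  apply: (it_mono (P := fun x => x.1 :&: x.2 == E0)) => // x hx.
  by case/andP: (phi_bounds a0 _ _ hx).
have hz : `|1 - eta| < 1 by rewrite ger0_norm ?subr_ge0 //; lra.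
apply/cvgr0Pnorm_lt => e ep.
have [j _ Hj] := (cvgr0Pnorm_lt _).1 (cvg_expr hz) e ep.
have hj : `|(1 - eta) ^+ j| < e by apply: Hj => /=.
near=> n.
have hK : (K * j <= n)%N by near: n; exact: nbhs_infty_ge.
case/andP: (hb n) => h0 h1.
rewrite ger0_norm //.
apply: le_lt_trans h1 _.
apply: le_lt_trans (t_anti _ _ A hK) _.
apply: le_lt_trans (@t_geo eta e1 he j A) _.
exact: le_lt_trans (ler_norm _) hj.
Unshelve. all: by end_near.
Qed.

Lemma main_add (a0 : V) (S T : {set V}) : T \subset S ->
  fp w 1 delta S = fp w 1 delta T + fp w 1 delta (S :\: T).
Proof.
move=> hTS.
have hE : forall X, (fun n => allmut_at w 1 delta n X) = (fun n => it (@after V) n f0 X).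
  by move=> X; apply: boolp.funext => n; exact: allmutE.
rewrite /fp !hE.
have hU : T :|: (S :\: T) = S.
  apply/setP => x; move/fintype.subsetP: hTS => /(_ x); rewrite !inE.
  by case: (x \in T); case: (x \in S) => // ->.
have hd : T :&: (S :\: T) == E0.
  by apply/eqP/setP => x; rewrite !inE; case: (x \in T); rewrite ?andbF.
have := cvgD (cvgD (q_cvg T) (q_cvg (S :\: T))) (dcvg a0 _ _ hd).
rewrite addr0 hU => H.
apply: cvg_lim => //.
apply: cvg_trans; last exact: H.
apply: near_eq_cvg; near=> n => /=.
rewrite !fctE; ring.
Unshelve. all: by end_near.
Qed.

End Main.

Lemma hsum_of (a0 : V) (hWo : forall u, 0 < \sum_y w u y) (hWi : forall v, 0 < \sum_x w x v) :
  \sum_u \sum_v p u v = 1.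
Proof.
rewrite /p /pair_prob fitE /=.
have hN : 0 < (#|V|%:R : R) by rewrite ltr0n; apply/card_gt0P; exists a0.
have hS1 : \sum_(x:V) (1:R) = #|V|%:R by rewrite sumr_const.
have hin1 : forall v, \sum_x 1 * w x v = \sum_x w x v.
  by move=> v; under eq_bigr do rewrite mul1r.
under eq_bigr do under eq_bigr do rewrite hin1 !mul1r hS1.
under eq_bigr do rewrite big_split.
rewrite big_split /= exchange_big /=.
have h1 : forall v, \sum_u delta * #|V|%:R^-1 * (w u v / \sum_x w x v) = delta * #|V|%:R^-1.
  move=> v; rewrite -mulr_sumr -mulr_suml mulfV ?mulr1 //; exact: lt0r_neq0.
have h2 : forall u, \sum_v (1 - delta) * #|V|%:R^-1 * (w u v / \sum_y w u y) = (1 - delta) * #|V|%:R^-1.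
  move=> u; rewrite -mulr_sumr -mulr_suml mulfV ?mulr1 //; exact: lt0r_neq0.
under eq_bigr do rewrite h1.
under [X in _ + X = _]eq_bigr do rewrite h2.
have key : forall c : R, c * #|V|%:R^-1 *+ #|V| = c.
  by move=> c; rewrite -mulr_natr -mulrA mulVf ?mulr1 ?lt0r_neq0.
by rewrite !sumr_const !key addrC subrK.
Qed.

Lemma path_first (e : rel V) x q : path e x q -> q != [::] -> exists y, e x y.
Proof. by case: q => [|y q] //= /andP [h _] _; exists y. Qed.

Lemma path_last (e : rel V) x q : path e x q -> last x q != x -> exists y, e y (last x q).
Proof.
elim: q x => [|y q IH] x /=; first by rewrite eqxx.
move=> /andP [hxy hq] hl.
have [hy|hy] := eqVneq (last y q) y.
  by exists x; rewrite hy.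
exact: IH.
Qed.

End Proof.

Theorem mainTheorem9 (R : realType) (V : finType) (w : V -> V -> R)
  (hw : forall u v : V, 0 <= w u v) (hsc : strongly_connected w)
  (delta : R) (hd0 : 0 <= delta) (hd1 : delta <= 1)
  (S T : {set V}) (hTS : T \subset S) :
  fp w 1 delta S = fp w 1 delta T + fp w 1 delta (S :\: T).
Proof.
have [[a [b hab]] | noedge] := boolp.pselect (exists a b, 0 < w a b).
  have hWo : forall u, 0 < \sum_y w u y.
    move=> u; have [->|hua] := eqVneq u a.
      by apply: lt_le_trans hab _; apply: sum_ge_term => y; exact: hw.
    have /connectP [q hq hl] := hsc u a.
    have hq0 : q != [::] by move: hl; case: q hq => //= _ hau; rewrite hau eqxx in hua.
    have [y hy] := @path_first V _ _ _ hq hq0.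
    by apply: lt_le_trans hy _; apply: sum_ge_term => y'; exact: hw.
  have hWi : forall v, 0 < \sum_x w x v.
    move=> v; have [->|hvb] := eqVneq v b.
      by apply: lt_le_trans hab _; apply: sum_ge_term => y; exact: hw.
    have /connectP [q hq hl] := hsc b v.
    have hl' : last b q != b by rewrite -hl.
    have [y hy] := @path_last V _ _ _ hq hl'.
    by rewrite hl; apply: lt_le_trans hy _; apply: sum_ge_term => y'; exact: hw.
  have hs := @hsum_of R V w delta a hWo hWi.
  exact: (@main_add R V w delta hw hd0 hd1 hs hsc a S T hTS).
have w0 : forall a b, w a b = 0.
  move=> a b; apply/eqP; rewrite eq_le hw andbT leNgt; apply/negP => h.
  by apply: noedge; exists a, b.
have q0 : forall n X, allmut_at w 1 delta n.+1 X = 0.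
  move=> n X /=; apply: big1 => S' _; rewrite /trans big1 ?mul0r // => u _.
  by apply: big1 => v _; rewrite /pair_prob !w0 !(mulr0, mul0r, addr0).
have fp0 : forall X, fp w 1 delta X = 0.
  move=> X; rewrite /fp; apply: cvg_lim => //; rewrite -cvg_shiftS /=.
  apply: cvg_near_cst; near=> n; exact: q0.
by rewrite !fp0 addr0.
Unshelve. all: by end_near.
Qed.
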